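(* Let $p\ge1$, $n\ge1$, and $u\in X^n\setminus\{0^n\}$ with decomposition $u=0^ka_1u_1a_2u_2\cdots a_tu_t$. Let $\mathcal P^u_n=(P^n_1(u),\dots,P^n_{m_u}(u))$ be the path of cycles of $u$ in $\Gamma^p_n$. Then: (1) $m_u=t$; (2) for each $j=1,\dots,t$, writing $N_j=k+j+\sum_{\ell=1}^j|u_\ell|$, the cycle $P^n_j(u)$ is the $e_{a_j}$-cycle with vertex set $\{0,a_j\}^{N_j}a_{j+1}u_{j+1}\cdots a_tu_t$ (so in particular $P^n_t(u)=C_n^{a_t}$); (3) the sequence of lengths is $\mathcal L^u_n=(2^{N_1},2^{N_2},\dots,2^{N_t})$, with $2^{N_t}=2^n$.
   Context: $X=\{0,1,\dots,p\}$; $\mathcal G_{S_p}$ is generated by $e_1,\dots,e_p$ acting on $X^\ast$ by $e_i(0w)=i\,e_i(w)$, $e_i(iw)=0w$, $e_i(jw)=jw$ for $j\notin\{0,i\}$. $\Gamma^p_n$ is the Schreier graph on $X^n$ with an edge labelled $e_j$ joining $v$ and $e_j(v)$ for all $v,j$. An $e_j$-cycle is the $\langle e_j\rangle$-orbit of a vertex together with its $e_j$-labelled edges; $C_n^i$ is the $e_i$-cycle with vertex set $\{0,i\}^n$. Decomposition: every $u\in X^n\setminus\{0^n\}$ is uniquely written $u=0^ka_1u_1\cdots a_tu_t$ with $k\ge0$, $a_j\in\{1,\dots,p\}$, $a_{j+1}\ne a_j$, $u_j\in\{0,a_j\}^\ast$. Path of cycles: consider the bipartite graph $B_n$ whose vertices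 are the vertices of $\Gamma^p_n$ and the $e$-cycles of length $\ge2$, a vertex being joined to each such cycle containing it; $B_n$ is a tree. Removing $0^n$ from $\Gamma^p_n$ leaves $p$ components; the $i$-th petal is the one containing $C_n^i\setminus\{0^n\}$. For $u\ne0^n$ in the $i$-th petal, the path of cycles $\mathcal P^u_n=(P^n_1(u),\dots,P^n_{m_u}(u))$ is the sequence of cycles met, in order, along the unique path in $B_n$ from $u$ to $C_n^i$ (so $u\in P^n_1(u)$ and $P^n_{m_u}(u)=C_n^i$), and $\mathcal L^u_n$ is the sequence of their lengths. *)

(* Defs.v *)
From mathcomp Require Import all_boot.
Set Implicit Arguments. Unset Strict Implicit. Unset Printing Implicit Defensive.

(* Alphabet X = {0,...,p} is 'I_p.+1; vertices of Gamma^p_n are n.-tuple 'I_p.+1. *)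

Fixpoint act (p : nat) (i : 'I_p.+1) (w : seq 'I_p.+1) : seq 'I_p.+1 :=
  match w with
  | [::] => [::]
  | x :: w' => if x == ord0 then i :: act i w'
               else if x == i then ord0 :: w'
               else x :: w'
  end.

Lemma size_act p (i : 'I_p.+1) w : size (act i w) = size w.
Proof.
elim: w => //= x w IH; case: ifP => _ /=; first by rewrite IH.
by case: ifP.
Qed.

Lemma act_tupleP p n (i : 'I_p.+1) (v : n.-tuple 'I_p.+1) : size (act i v) == n.
Proof. by rewrite size_act size_tuple. Qed.

Definition eact p n (i : 'I_p.+1) (v : n.-tuple 'I_p.+1) : n.-tuple 'I_p.+1 :=
  Tuple (act_tupleP i v).

(* <e_j>-orbit of v (e_j is a bijection of the finite set X^n, so the orbit
   under the cyclic group equals the forward orbit) *)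
Definition orbit_e p n (j : 'I_p.+1) (v : n.-tuple 'I_p.+1) : {set n.-tuple 'I_p.+1} :=
  [set w | fconnect (eact j) v w].

(* an e-cycle is recorded as (label j, vertex set) *)
Definition ecycle p n := ('I_p.+1 * {set n.-tuple 'I_p.+1})%type.

(* e-cycles of length >= 2 : the cycle-nodes of B_n *)
Definition is_cycle p n (c : ecycle p n) : bool :=
  [&& (0 < c.1)%N, [exists v, c.2 == orbit_e c.1 v] & (2 <= #|c.2|)%N].

Definition cycle_length p n (c : ecycle p n) : nat := #|c.2|.

Definition zero_word p n : n.-tuple 'I_p.+1 := nseq_tuple n (ord0 : 'I_p.+1).

Definition Ccyc p n (i : 'I_p.+1) : ecycle p n :=
  (i, [set v : n.-tuple 'I_p.+1 | all (fun x => (x == ord0) || (x == i)) v]).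

Definition gedge_no0 p n (v w : n.-tuple 'I_p.+1) : bool :=
  [&& v != zero_word p n, w != zero_word p n &
     [exists j : 'I_p.+1, (0 < j)%N && ((eact j v == w) || (eact j w == v))]].

Definition in_petal p n (i : 'I_p.+1) (u : n.-tuple 'I_p.+1) : Prop :=
  u != zero_word p n /\
  exists2 w, w \in (Ccyc n i).2 & (w != zero_word p n) && connect (@gedge_no0 p n) u w.

(* vs = [v_0;...;v_(m-1)], cs = [c_1;...;c_m]: the path
   u = v_0, c_1, v_1, c_2, ..., v_(m-1), c_m = C  in the bipartite graph B_n
   (vertex v adjacent to cycle c iff v belongs to c), with no repeated node. *)
Definition Bpath p n (u : n.-tuple 'I_p.+1) (vs : seq (n.-tuple 'I_p.+1))
    (cs : seq (ecycle p n)) (C : ecycle p n) : Prop :=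
  [/\ (0 < size cs)%N, size vs = size cs, head u vs = u & all (@is_cycle p n) cs] /\
  [/\ uniq vs, uniq cs,
      (forall j, (j < size cs)%N -> nth u vs j \in (nth C cs j).2),
      (forall j, (j.+1 < size cs)%N -> nth u vs j.+1 \in (nth C cs j).2)
    & last C cs = C].

Definition path_of_cycles p n (u : n.-tuple 'I_p.+1) (cs : seq (ecycle p n)) : Prop :=
  exists i : 'I_p.+1, [/\ (0 < i)%N, in_petal i u & exists vs, Bpath u vs cs (Ccyc n i)].

(* the word a_1 u_1 ... a_t u_t from the lists a = [a_1..a_t], us = [u_1..u_t] *)
Definition join_blocks p (a : seq 'I_p.+1) (us : seq (seq 'I_p.+1)) : seq 'I_p.+1 :=
  flatten [seq x.1 :: x.2 | x <- zip a us].

(* Main.v *)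
Require Import Defs.
From mathcomp Require Import all_boot zify.
Set Implicit Arguments. Unset Strict Implicit. Unset Printing Implicit Defensive.

Section Words.
Variable p : nat.
Local Notation A := 'I_p.+1.
Local Notation Z := (ord0 : A).

Definition all01 (j : A) (w : seq A) := all (fun x => (x == Z) || (x == j)) w.
Definition good (j : A) (w : seq A) :=
  if w is y :: _ then ~~ ((y == Z) || (y == j)) else true.

Lemma act_good (j : A) rest : good j rest -> act j rest = rest.
Proof. by case: rest => //= y r /norP [/negbTE -> /negbTE ->]. Qed.

Lemma act_cat (j : A) x rest : act j rest = rest -> act j (x ++ rest) = act j x ++ rest.
Proof.
move=> H; elim: x => //= y x IH.
case: ifP => _; first by rewrite IH.
by case: ifP.
Qed.

Fixpoint bin (j : A) (w : seq A) : nat :=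
  if w is y :: w' then (y == j) + (bin j w').*2 else 0.

Lemma all01_act (j : A) x : all01 j x -> all01 j (act j x).
Proof.
elim: x => //= y x IH /andP [Hy Hx].
case: (eqVneq y Z) => [_|yZ] /=; first by rewrite ?eqxx ?orbT IH ?orbT.
case: (eqVneq y j) => [_|yj] /=; first by rewrite ?eqxx Hx.
by rewrite Hy Hx.
Qed.

Lemma size_act' (j : A) x : size (act j x) = size x.
Proof. exact: size_act. Qed.

Lemma bin_act (j : A) x : j != Z -> all01 j x -> 0 < bin j x -> bin j (act j x) = (bin j x).-1.
Proof.
move=> jZ; have ZjF : (Z == j) = false by rewrite eq_sym (negbTE jZ).
elim: x => //= y x IH /andP [Hy Hx].
case: (eqVneq y Z) => [->|yZ] /=.
  rewrite ZjF add0n eqxx /= => H.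
  have Hb : 0 < bin j x by rewrite -double_gt0.
  rewrite IH // add1n; move: Hb; case: (bin j x) => // m _ /=.
move: Hy; rewrite (negbTE yZ) /= => /eqP ->; rewrite eqxx /= => _.
by rewrite ZjF.
Qed.

Lemma bin0 (j : A) x : j != Z -> all01 j x -> bin j x = 0 -> x = nseq (size x) Z.
Proof.
move=> jZ; elim: x => //= y x IH /andP [Hy Hx] /eqP.
rewrite addn_eq0 double_eq0 eqb0 => /andP [Hyj /eqP Hb].
by move: Hy; rewrite (negbTE Hyj) orbF => /eqP ->; rewrite -IH.
Qed.

Lemma iter_bin (j : A) x : j != Z -> all01 j x -> iter (bin j x) (act j) x = nseq (size x) Z.
Proof.
move=> jZ Hx; move Hm: (bin j x) => m.
elim: m x Hx Hm => [|m IH] x Hx Hm.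
  exact: (bin0 jZ Hx Hm).
rewrite iterSr; have := bin_act jZ Hx; rewrite Hm => /(_ isT) /= Hb.
by rewrite IH ?size_act // all01_act.
Qed.

Fixpoint ainv (j : A) (w : seq A) : seq A :=
  match w with
  | [::] => [::]
  | y :: w' => if y == j then Z :: ainv j w' else if y == Z then j :: w' else y :: w'
  end.

Lemma act_inj (j : A) : j != Z -> injective (act j).
Proof.
move=> jZ; apply: (can_inj (g := ainv j)).
elim=> //= y w IH.
case: (eqVneq y Z) => [->|yZ] /=; first by rewrite eqxx IH.
case: (eqVneq y j) => [->|yj] /=.
  by rewrite eq_sym (negbTE jZ).
by rewrite (negbTE yj) (negbTE yZ).
Qed.

End Words.

Section Tup.
Variables p n : nat.
Local Notation A := 'I_p.+1.
Local Notation Z := (ord0 : A).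
Local Notation V := (n.-tuple A).

Definition Sset (j : A) (M : nat) (rest : seq A) : {set V} :=
  [set w : V | all01 j (take M w) && (drop M w == rest)].

Lemma val_iter (j : A) m (v : V) : val (iter m (eact j) v) = iter m (act j) (val v).
Proof. by elim: m => //= m ->. Qed.

Lemma iter_act_cat (j : A) m x rest : good j rest ->
  iter m (act j) (x ++ rest) = iter m (act j) x ++ rest.
Proof. by move=> g; elim: m => //= m ->; rewrite act_cat // act_good. Qed.

Lemma eact_inj (j : A) : j != Z -> injective (@eact p n j).
Proof. by move=> jZ v w /(congr1 val) /= /act_inj -/(_ jZ) /val_inj. Qed.

Lemma Sset_eact (j : A) M rest (w : V) : M <= n -> good j rest ->
  w \in Sset j M rest -> eact j w \in Sset j M rest.
Proof.
move=> Mn g; rewrite !inE => /andP [H /eqP E].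
have -> : val (eact j w) = act j (take M w) ++ rest.
  by rewrite /= -E -act_cat ?cat_take_drop // E act_good.
have sz : size (act j (take M w)) = M by rewrite size_act size_takel ?size_tuple.
by rewrite take_size_cat // drop_size_cat // eqxx all01_act.
Qed.

Lemma iter_root (j : A) M (v : V) : j != Z -> M <= n -> all01 j (take M v) ->
  good j (drop M v) -> val (iter (bin j (take M v)) (eact j) v) = nseq M Z ++ drop M v.
Proof.
move=> jZ Mn Hv g; rewrite val_iter; set b := bin _ _.
have szv : size (take M v) = M by rewrite size_takel ?size_tuple.
by rewrite -{1}(cat_take_drop M (val v)) iter_act_cat // /b iter_bin // szv.
Qed.

Lemma orbit_S (j : A) M (v : V) : j != Z -> M <= n -> all01 j (take M v) ->
  good j (drop M v) -> orbit_e j v = Sset j M (drop M v).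
Proof.
move=> jZ Mn Hv g; apply/setP => w; rewrite !inE; apply/idP/idP.
  move=> /iter_findex <-; elim: (findex _ v w) => [|m IH] /=.
    by rewrite Hv eqxx.
  have Hin : iter m (eact j) v \in Sset j M (drop M v) by rewrite inE.
  by have := Sset_eact Mn g Hin; rewrite inE.
move=> /andP [Hw /eqP E].
have szv : size (take M v) = M by rewrite size_takel ?size_tuple.
have szw : size (take M (val w)) = M by rewrite size_takel ?size_tuple.
set z := iter (bin j (take M v)) (eact j) v.
set z' := iter (bin j (take M w)) (eact j) w.
have zz : z = z'.
  apply: val_inj; rewrite !iter_root // ?E //; by rewrite -E.
apply: (connect_trans (fconnect_iter _ _ _ : fconnect _ v z)).
by rewrite zz fconnect_sym ?fconnect_iter //; apply: eact_inj.
Qed.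

Lemma card_S (j : A) M rest : j != Z -> M + size rest = n -> #|Sset j M rest| = 2 ^ M.
Proof.
move=> jZ sz.
pose g (x : bool) : A := if x then j else Z.
have ginj : injective g.
  by case; case => //= /eqP; rewrite ?(negbTE jZ) // eq_sym (negbTE jZ).
pose f (b : M.-tuple bool) : V := insubd (nseq_tuple n Z) (map g b ++ rest).
have fv b : val (f b) = map g b ++ rest.
  by rewrite val_insubd size_cat size_map size_tuple sz eqxx.
have finj : injective f.
  move=> b1 b2 /(congr1 val); rewrite !fv => /eqP.
  rewrite eqseq_cat ?size_map ?size_tuple // => /andP [/eqP /(inj_map ginj) E _].
  exact: val_inj.
have Mn : M <= size (val (nseq_tuple n Z)) by rewrite size_tuple -sz leq_addr.
have -> : Sset j M rest = [set f b | b in predT].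
  apply/setP => w; rewrite inE; apply/idP/imsetP.
  - move=> /andP [Hw /eqP E].
    have szb : size [seq x == j | x <- take M w] == M.
      by rewrite size_map size_takel // size_tuple -sz leq_addr.
    exists (Tuple szb) => //; apply: val_inj; rewrite fv /= -map_comp -E.
    rewrite -[in LHS](cat_take_drop M w); congr (_ ++ _).
    rewrite -[LHS]map_id; apply/eq_in_map => x /(allP Hw) /= /orP [] /eqP ->.
      by rewrite /g eq_sym (negbTE jZ).
    by rewrite /g eqxx.
  - case=> b _ ->; rewrite fv take_size_cat ?size_map ?size_tuple //.
    rewrite drop_size_cat ?size_map ?size_tuple // eqxx andbT.
    by rewrite /all01 all_map; apply/allP => x _ /=; case: x; rewrite /g eqxx ?orbT.
by rewrite card_imset // card_tuple card_bool.
Qed.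

End Tup.

Section Lev.
Variables p n : nat.
Local Notation A := 'I_p.+1.
Local Notation Z := (ord0 : A).
Local Notation V := (n.-tuple A).

Fixpoint nb (q : A) (w : seq A) : nat :=
  match w with
  | [::] => 0
  | x :: w' => if x == Z then nb q w' else (x != q) + nb x w'
  end.
Definition bl (w : seq A) := nb Z w.

Lemma nb_cat01 (j : A) x rest q : j != Z -> all01 j x -> (q == Z) || (q == j) ->
  nb q (x ++ rest) = (has (pred1 j) x && (q == Z)) + nb (if has (pred1 j) x then j else q) rest.
Proof.
move=> jZ; elim: x q => //= y x IH q /andP [Hy Hx] Hq.
case: (eqVneq y Z) => [->|yZ].
  by rewrite ?eqxx /= IH // (negbTE (ltac:(by rewrite eq_sym) : (Z != j))).
move: Hy; rewrite (negbTE yZ) /= => /eqP ->; rewrite eqxx /=.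
rewrite IH ?eqxx ?orbT //; case: (has _ x) => /=; rewrite ?andbF.
- by rewrite ?(negbTE jZ); case/orP: Hq => /eqP ->; rewrite ?eqxx ?jZ ?(negbTE jZ) ?add0n.
- by rewrite ?(negbTE jZ); case/orP: Hq => /eqP ->; rewrite ?eqxx ?jZ ?(negbTE jZ) ?add0n.
Qed.

Lemma nb_good (j : A) rest : j != Z -> good j rest -> nb j rest = nb Z rest.
Proof.
move=> jZ; case: rest => //= y r /norP [yZ yj].
by rewrite (negbTE yZ) yj.
Qed.

Lemma bl_split (j : A) x rest : j != Z -> all01 j x -> good j rest ->
  bl (x ++ rest) = has (pred1 j) x + bl rest.
Proof.
move=> jZ Hx g; rewrite /bl (@nb_cat01 j x rest Z jZ Hx) ?eqxx // andbT.
by case: (has _ x) => //; rewrite nb_good.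
Qed.

Lemma bl_nseq m w : bl (nseq m Z ++ w) = bl w.
Proof. by elim: m. Qed.

Definition pre (j : A) (v : seq A) := find (fun y => ~~ ((y == Z) || (y == j))) v.

Lemma all01_pre (j : A) v : all01 j (take (pre j v) v).
Proof.
elim: v => //= y v IH; rewrite /pre /=.
by case: ifP => //= /negbFE -> /=.
Qed.

Lemma good_pre (j : A) v : good j (drop (pre j v) v).
Proof.
elim: v => //= y v IH; rewrite /pre /=.
by case: ifP => //= /negbFE ->.
Qed.

Lemma all01_nohas (j : A) x : all01 j x -> ~~ has (pred1 j) x -> x = nseq (size x) Z.
Proof.
elim: x => //= y x IH /andP [Hy Hx] /norP [yj /(IH Hx) <-].
by move: Hy; rewrite (negbTE yj) orbF => /eqP ->.
Qed.

Definition fnz (w : seq A) := head Z [seq y <- w | y != Z].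

Lemma fnz_cat (j : A) x rest : j != Z -> all01 j x -> has (pred1 j) x -> fnz (x ++ rest) = j.
Proof.
move=> jZ; rewrite /fnz; elim: x => //= y x IH /andP [Hy Hx] /orP [/eqP ->|H].
  by rewrite jZ.
case: (eqVneq y Z) => [_|yZ] /=; first exact: IH.
by move: Hy; rewrite (negbTE yZ) /= => /eqP.
Qed.

Definition maxc (c : ecycle p n) := \max_(w in c.2) bl w.

Lemma cyc_struct (c : ecycle p n) (v : V) : is_cycle c -> v \in c.2 ->
  [/\ c.1 != Z, c.2 = orbit_e c.1 v & c.2 = Sset n c.1 (pre c.1 v) (drop (pre c.1 v) v)].
Proof.
case/and3P => c0 /existsP [v0 /eqP E] _ Hv.
have jZ : c.1 != Z by apply/eqP => E'; rewrite E' in c0.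
have E2 : c.2 = orbit_e c.1 v.
  rewrite E; apply/setP => w; rewrite !inE; apply: same_connect.
    by move=> x y; apply: fconnect_sym; apply: eact_inj.
  by move: Hv; rewrite E inE.
split => //; rewrite E2 (@orbit_S p n c.1 (pre c.1 v)) //.
- by apply: leq_trans (find_size _ _) _; rewrite size_tuple.
- exact: all01_pre.
- exact: good_pre.
Qed.

Lemma S_bl (j : A) M rest (w : V) : j != Z -> M <= n -> good j rest ->
  w \in Sset n j M rest -> bl w = has (pred1 j) (take M w) + bl rest.
Proof.
move=> jZ Mn g; rewrite inE => /andP [H /eqP E].
have := bl_split jZ H g; rewrite -E cat_take_drop => ->.
by rewrite E.
Qed.

Lemma S_nohas (j : A) M rest (w : V) : M <= n ->
  w \in Sset n j M rest -> ~~ has (pred1 j) (take M w) -> val w = nseq M Z ++ rest.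
Proof.
move=> Mn; rewrite inE => /andP [H /eqP E] nh.
have -> : val w = take M w ++ drop M w by rewrite cat_take_drop.
by rewrite E (all01_nohas H nh) size_takel // size_tuple.
Qed.

Lemma pre_le (j : A) (v : V) : pre j v <= n.
Proof. by apply: leq_trans (find_size _ _) _; rewrite size_tuple. Qed.

Lemma bmax (c : ecycle p n) (v : V) : is_cycle c -> v \in c.2 ->
  maxc c = (bl (drop (pre c.1 v) v)).+1.
Proof.
move=> Hc Hv; have [jZ _ ES] := cyc_struct Hc Hv.
have Mn := pre_le c.1 v; have g := good_pre c.1 v.
apply/eqP; rewrite eqn_leq; apply/andP; split.
  apply/bigmax_leqP => w; rewrite ES => Hw; rewrite (S_bl jZ Mn g Hw) .
  by case: has; rewrite ?add1n ?add0n ?leqnSn.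
case/and3P: Hc => _ _ /card_gt1P [w1 [w2 [H1 H2 ne]]].
case h1: (has (pred1 c.1) (take (pre c.1 v) w1)).
  apply: leq_trans (leq_bigmax_cond _ H1); rewrite ES in H1.
  by rewrite (S_bl jZ Mn g H1) h1.
case h2: (has (pred1 c.1) (take (pre c.1 v) w2)).
  apply: leq_trans (leq_bigmax_cond _ H2); rewrite ES in H2.
  by rewrite (S_bl jZ Mn g H2) h2.
rewrite ES in H1 H2.
have := S_nohas Mn H1 (negbT h1); have := S_nohas Mn H2 (negbT h2).
by move=> <- /val_inj E; rewrite E eqxx in ne.
Qed.

Lemma bl_le_maxc (c : ecycle p n) (v : V) : v \in c.2 -> bl v <= maxc c.
Proof. by move=> Hv; apply: (leq_bigmax_cond _ Hv). Qed.

Lemma maxc_le (c : ecycle p n) (v : V) : is_cycle c -> v \in c.2 -> maxc c <= (bl v).+1.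
Proof.
move=> Hc Hv; have [jZ _ ES] := cyc_struct Hc Hv.
rewrite (bmax Hc Hv) ltnS.
have Hv' := Hv; rewrite ES in Hv'.
by rewrite (S_bl jZ (pre_le _ _) (good_pre _ _) Hv') leq_addl.
Qed.

Lemma low_uniq (c : ecycle p n) (w1 w2 : V) : is_cycle c -> w1 \in c.2 -> w2 \in c.2 ->
  bl w1 < maxc c -> bl w2 < maxc c -> w1 = w2.
Proof.
move=> Hc H1 H2; have [jZ _ ES] := cyc_struct Hc H1.
rewrite (bmax Hc H1); rewrite ES in H1 H2.
have Mn := pre_le c.1 w1; have g := good_pre c.1 w1.
rewrite (S_bl jZ Mn g H1) (S_bl jZ Mn g H2) !ltnS.
case h1: has; rewrite ?add1n ?ltnn //; case h2: has; rewrite ?add1n ?ltnn // => _ _.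
apply: val_inj; rewrite (S_nohas Mn H1 (negbT h1)).
by rewrite (S_nohas Mn H2 (negbT h2)).
Qed.

Lemma up_label (c : ecycle p n) (v : V) : is_cycle c -> v \in c.2 ->
  maxc c <= bl v -> fnz v = c.1.
Proof.
move=> Hc Hv; have [jZ _ ES] := cyc_struct Hc Hv.
rewrite (bmax Hc Hv).
have Hv' := Hv; rewrite ES in Hv'.
have Mn := pre_le c.1 v; have g := good_pre c.1 v.
rewrite (S_bl jZ Mn g Hv'); case h: has; rewrite ?add0n ?ltnn // => _.
by rewrite -(cat_take_drop (pre c.1 v) v) (fnz_cat _ jZ) // all01_pre.
Qed.

Lemma up_uniq (c1 c2 : ecycle p n) (v : V) : is_cycle c1 -> is_cycle c2 ->
  v \in c1.2 -> v \in c2.2 -> maxc c1 <= bl v -> maxc c2 <= bl v -> c1 = c2.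
Proof.
move=> Hc1 Hc2 H1 H2 L1 L2.
have E1 := up_label Hc1 H1 L1; have E2 := up_label Hc2 H2 L2.
have [_ O1 _] := cyc_struct Hc1 H1; have [_ O2 _] := cyc_struct Hc2 H2.
move: E1 E2 O1 O2; case: c1 {Hc1 H1 L1} => j1 S1; case: c2 {Hc2 H2 L2} => j2 S2 /=.
by move=> -> <- -> ->.
Qed.

Lemma bmax' (c : ecycle p n) M rest : is_cycle c -> c.1 != Z -> M <= n -> good c.1 rest ->
  c.2 = Sset n c.1 M rest -> maxc c = (bl rest).+1.
Proof.
move=> Hc jZ Mn g ES.
apply/eqP; rewrite eqn_leq; apply/andP; split.
  apply/bigmax_leqP => w; rewrite ES => Hw; rewrite (S_bl jZ Mn g Hw).
  by case: has; rewrite ?add1n ?add0n ?leqnSn.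
case/and3P: Hc => _ _ /card_gt1P [w1 [w2 [H1 H2 ne]]].
case h1: (has (pred1 c.1) (take M w1)).
  apply: leq_trans (leq_bigmax_cond _ H1); rewrite ES in H1.
  by rewrite (S_bl jZ Mn g H1) h1.
case h2: (has (pred1 c.1) (take M w2)).
  apply: leq_trans (leq_bigmax_cond _ H2); rewrite ES in H2.
  by rewrite (S_bl jZ Mn g H2) h2.
rewrite ES in H1 H2.
have := S_nohas Mn H1 (negbT h1); have := S_nohas Mn H2 (negbT h2).
by move=> <- /val_inj E; rewrite E eqxx in ne.
Qed.

Definition lnz (w : seq A) := last Z [seq y <- w | y != Z].

Lemma lnz_zero_act (j : A) w : j != Z -> ~~ has (predC1 Z) (act j w) -> has (predC1 Z) w -> lnz w = j.
Proof.
move=> jZ; case: w => //= y w.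
case: (eqVneq y Z) => [->|yZ] /=; first by rewrite jZ.
case: (eqVneq y j) => [->|yj] /=; last by rewrite yZ.
move=> H _; rewrite /lnz /= jZ /=.
suff -> : [seq y0 <- w | y0 != Z] = [::] by [].
elim: w H => //= x w IH /norP [xZ /IH ->]; by move: xZ; rewrite negbK => ->.
Qed.

Lemma last_filter_ne (x y : A) s : has (predC1 Z) s -> last x [seq z <- s | z != Z] = last y [seq z <- s | z != Z].
Proof.
elim: s => //= z s IH /orP [zZ|H].
  by rewrite zZ /=.
by case: ifP => _ //=; apply: IH.
Qed.

Lemma lnz_act (j : A) w : j != Z -> has (predC1 Z) w -> has (predC1 Z) (act j w) -> lnz (act j w) = lnz w.
Proof.
move=> jZ; elim: w => //= y w IH.
case: (eqVneq y Z) => [->|yZ] /=.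
  move=> Hw; rewrite /lnz /= jZ /=.
  case Ha: (has (predC1 Z) (act j w)) => _.
    by rewrite (last_filter_ne _ Z Ha); apply: IH.
  have E : [seq y0 <- act j w | y0 != Z] = [::].
    by apply/eqP; rewrite -size_eq0 size_filter -leqn0 leqNgt -has_count Ha.
  by rewrite E /=; symmetry; exact: (lnz_zero_act jZ (negbT Ha) Hw).
case: (eqVneq y j) => [->|yj] //= _ Hw.
rewrite /lnz /= jZ /=; apply: last_filter_ne.
by move: Hw; rewrite /= ?eqxx.
Qed.

End Lev.

Section Path.
Variables p n : nat.
Local Notation A := 'I_p.+1.
Local Notation Z := (ord0 : A).
Local Notation V := (n.-tuple A).

Variables (u : V) (vs : seq V) (cs : seq (ecycle p n)) (C : ecycle p n).
Hypothesis HB : Bpath u vs cs C.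

Local Notation v_ i := (nth u vs i).
Local Notation c_ i := (nth C cs i).

Lemma cyc_i i : i < size cs -> is_cycle (c_ i).
Proof. by case: HB => [[_ _ _ /allP H] _] Hi; apply/H/mem_nth. Qed.

Lemma in1 i : i < size cs -> v_ i \in (c_ i).2.
Proof. by case: HB => _ [_ _ H _ _]; apply: H. Qed.

Lemma in2 i : i.+1 < size cs -> v_ i.+1 \in (c_ i).2.
Proof. by case: HB => _ [_ _ _ H _]; apply: H. Qed.

Lemma D1 i : i.+1 < size cs -> bl (v_ i) < maxc (c_ i) -> maxc (c_ i) <= bl (v_ i.+1).
Proof.
move=> Hi L; rewrite leqNgt; apply/negP => L'.
have Hi' : i < size cs by apply: ltnW.
have E := low_uniq (cyc_i Hi') (in1 Hi') (in2 Hi) L L'.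
case: HB => [[_ Hs _ _] [Hu _ _ _ _]].
by move/eqP: E; rewrite nth_uniq ?Hs ?Hi ?Hi' // => /eqP /n_Sn.
Qed.

Lemma D2 i : i.+1 < size cs -> maxc (c_ i) <= bl (v_ i.+1) -> bl (v_ i.+1) < maxc (c_ i.+1).
Proof.
move=> Hi L; rewrite ltnNge; apply/negP => L'.
have Hi' : i < size cs by apply: ltnW.
have E := up_uniq (cyc_i Hi') (cyc_i Hi) (in2 Hi) (in1 Hi) L L'.
case: HB => [[_ Hs _ _] [_ Hc _ _ _]].
by move/eqP: E; rewrite nth_uniq ?Hi ?Hi' // => /eqP /n_Sn.
Qed.

Lemma Down i d : i + d < size cs -> bl (v_ i) < maxc (c_ i) ->
  bl (v_ (i + d)) < maxc (c_ (i + d)) /\ maxc (c_ i) + d <= maxc (c_ (i + d)).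
Proof.
move=> Hd L; elim: d Hd => [|d IH] Hd; first by rewrite !addn0.
have Hd' : i + d < size cs by apply: ltnW; rewrite -addnS.
have [L1 L2] := IH Hd'.
have Hs : (i + d).+1 < size cs by rewrite -addnS.
have L3 := D1 Hs L1; have L4 := D2 Hs L3.
rewrite addnS; split => //.
by rewrite addnS; apply: leq_trans L4; rewrite ltnS (leq_trans L2 L3).
Qed.

Lemma Down_last i : i < size cs -> bl (v_ i) < maxc (c_ i) -> maxc (c_ i) <= maxc (last C cs).
Proof.
move=> Hi L; have Hd : i + (size cs - i.+1) < size cs by lia.
have [_ L2] := Down Hd L.
have E : i + (size cs - i.+1) = (size cs).-1 by lia.
move: L2; rewrite E nth_last; apply: leq_trans; apply: leq_addr.
Qed.

End Path.

Section Main.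
Variables p n : nat.
Local Notation A := 'I_p.+1.
Local Notation Z := (ord0 : A).
Local Notation V := (n.-tuple A).
Variables (u : V) (k : nat) (a : seq A) (us : seq (seq A)).
Hypothesis hu : u != zero_word p n.
Hypothesis hsize : size a = size us.
Hypothesis ha : all (fun x : A => (0 < x)%N) a.
Hypothesis hadj : forall j, (j.+1 < size a)%N -> nth ord0 a j != nth ord0 a j.+1.
Hypothesis hus : forall j, (j < size a)%N ->
           all (fun x => (x == ord0) || (x == nth ord0 a j)) (nth [::] us j).
Hypothesis hdec : val u = nseq k ord0 ++ join_blocks a us.

Local Notation t := (size a).
Definition Np j := (k + j + \sum_(l < j) size (nth [::] us l))%N.
Definition Jb j := join_blocks (drop j a) (drop j us).
Definition rseq j := nseq (Np j) Z ++ Jb j.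
Definition Pc j : ecycle p n := (nth Z a j, Sset n (nth Z a j) (Np j.+1) (Jb j.+1)).

Lemma Np_S j : Np j.+1 = (Np j + size (nth [::] us j)).+1.
Proof. by rewrite /Np big_ord_recr /=; lia. Qed.

Lemma aZ j : j < t -> nth Z a j != Z.
Proof.
move=> Hj; have := (allP ha) _ (mem_nth Z Hj).
by apply: contraTneq => ->.
Qed.

Lemma Jb_cons j : j < t -> Jb j = nth Z a j :: nth [::] us j ++ Jb j.+1.
Proof.
move=> Hj; rewrite /Jb (drop_nth Z Hj) (drop_nth [::]) -?hsize //.
Qed.

Lemma Jb_t : Jb t = [::].
Proof. by rewrite /Jb drop_oversize // drop_oversize // -hsize. Qed.

Lemma rseq_S j : j < t -> rseq j = nseq (Np j) Z ++ (nth Z a j :: nth [::] us j) ++ Jb j.+1.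
Proof. by move=> Hj; rewrite /rseq Jb_cons. Qed.

Lemma rseq0 : rseq 0 = val u.
Proof. by rewrite hdec /rseq /Np big_ord0 /Jb !drop0 addn0 addn0. Qed.

Lemma size_rseq j : j <= t -> size (rseq j) = n.
Proof.
elim: j => [|j IH] Hj; first by rewrite rseq0 size_tuple.
rewrite -IH ?(ltnW Hj) // (rseq_S Hj) /rseq Np_S !size_cat !size_nseq /=; lia.
Qed.

Lemma Np_t : Np t = n.
Proof. by have := size_rseq (leqnn t); rewrite /rseq Jb_t cats0 size_nseq. Qed.

Lemma t_pos : 0 < t.
Proof.
case H: t => //; move: hdec; have -> : a = [::] by apply: size0nil.
have Z0 : zip [::] us = [::] by case: us.
rewrite /join_blocks Z0 /= ?cats0 => E.
have nk : n = k by rewrite -(size_tuple u) E ?cats0 size_nseq.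
by move: hu; rewrite -(inj_eq val_inj) /= E nk eqxx.
Qed.

Lemma size_Jb j : j < t -> Np j.+1 + size (Jb j.+1) = n.
Proof. by move=> Hj; rewrite -(size_rseq Hj) /rseq size_cat size_nseq. Qed.

Lemma all01_block j : j < t -> all01 (nth Z a j) (nseq (Np j) Z ++ nth Z a j :: nth [::] us j).
Proof.
move=> Hj; rewrite /all01 all_cat /=; apply/andP; split.
  by apply/allP => x /nseqP [-> _]; rewrite ?eqxx.
by rewrite ?eqxx ?orbT /= (hus Hj).
Qed.

Lemma good_Jb j : j < t -> good (nth Z a j) (Jb j.+1).
Proof.
move=> Hj; case: (ltnP j.+1 t) => H.
  rewrite (Jb_cons H) /= negb_or (aZ H) /=.
  by rewrite eq_sym hadj.
have -> : j.+1 = t by apply/eqP; rewrite eqn_leq H Hj.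
by rewrite Jb_t.
Qed.

Lemma bl_Jb d j : j + d = t -> bl (Jb j) = d.
Proof.
elim: d j => [|d IH] j E; first by rewrite addn0 in E; rewrite E Jb_t.
have Hj : j < t by lia.
rewrite (Jb_cons Hj) -cat_cons (bl_split (aZ Hj)) ?good_Jb //.
- by rewrite /= eqxx (IH j.+1) //; lia.
- by rewrite /all01 /= eqxx orbT (hus Hj).
Qed.

Lemma bl_rseq j : j <= t -> bl (rseq j) = t - j.
Proof. by move=> Hj; rewrite /rseq bl_nseq (bl_Jb (d := t - j)) //; lia. Qed.

Definition rt j : V := insubd u (rseq j).

Lemma rtE j : j <= t -> val (rt j) = rseq j.
Proof. by move=> Hj; rewrite val_insubd size_rseq // eqxx. Qed.

Lemma rt0 : rt 0 = u.
Proof. by apply: val_inj; rewrite rtE // rseq0. Qed.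

Lemma take_rt j : j < t -> take (Np j.+1) (rt j) = nseq (Np j) Z ++ nth Z a j :: nth [::] us j.
Proof.
move=> Hj; rewrite rtE ?(ltnW Hj) // rseq_S // catA take_size_cat //.
by rewrite size_cat size_nseq Np_S /= addnS.
Qed.

Lemma drop_rt j : j < t -> drop (Np j.+1) (rt j) = Jb j.+1.
Proof.
move=> Hj; rewrite rtE ?(ltnW Hj) // rseq_S // catA drop_size_cat //.
by rewrite size_cat size_nseq Np_S /= addnS.
Qed.

Lemma rt_in1 j : j < t -> rt j \in (Pc j).2.
Proof. by move=> Hj; rewrite inE take_rt // drop_rt // eqxx andbT all01_block. Qed.

Lemma rt_in2 j : j < t -> rt j.+1 \in (Pc j).2.
Proof.
move=> Hj; rewrite inE rtE // /rseq take_size_cat ?size_nseq //.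
rewrite drop_size_cat ?size_nseq // eqxx andbT.
by apply/allP => x /nseqP [-> _]; rewrite eqxx.
Qed.

Lemma Np_le j : j < t -> Np j.+1 <= n.
Proof. by move=> Hj; rewrite -(size_Jb Hj) leq_addr. Qed.

Lemma Pc_orbit j : j < t -> (Pc j).2 = orbit_e (nth Z a j) (rt j).
Proof.
move=> Hj; rewrite (orbit_S (aZ Hj) (Np_le Hj)).
- by rewrite drop_rt.
- by rewrite take_rt // all01_block.
- by rewrite drop_rt // good_Jb.
Qed.

Lemma card_Pc j : j < t -> #|(Pc j).2| = 2 ^ (Np j.+1).
Proof. by move=> Hj; rewrite card_S ?aZ ?size_Jb. Qed.

Lemma Pc_cycle j : j < t -> is_cycle (Pc j).
Proof.
move=> Hj; apply/and3P; split.
- by rewrite lt0n; apply: (aZ Hj).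
- by apply/existsP; exists (rt j); rewrite Pc_orbit.
- rewrite card_Pc // Np_S expnS.
  by rewrite -[2]muln1 leq_mul2l /= expn_gt0.
Qed.

Lemma maxc_Pc j : j < t -> maxc (Pc j) = t - j.
Proof.
move=> Hj; rewrite (bmax' (M := Np j.+1) (rest := Jb j.+1) (Pc_cycle Hj)) ?aZ ?Np_le ?good_Jb //.
by rewrite (bl_Jb (d := t - j.+1)); lia.
Qed.

Lemma bl_rt j : j <= t -> bl (rt j) = t - j.
Proof. by move=> Hj; rewrite /bl rtE // -/(bl _) bl_rseq. Qed.

Lemma all_zero (s : seq A) : ~~ has (predC1 Z) s -> s = nseq (size s) Z.
Proof. by elim: s => //= x s IH /norP [/negbNE /eqP -> /IH <-]. Qed.

Lemma nz_has (w : V) : w != zero_word p n -> has (predC1 Z) w.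
Proof.
apply: contraR => H; apply/eqP/val_inj => /=.
by rewrite (all_zero H) size_tuple.
Qed.

Lemma lnz_edge (v w : V) : gedge_no0 v w -> lnz v = lnz w.
Proof.
case/and3P => vZ wZ /existsP [j /andP [j0 H]].
have jZ : j != Z by apply/eqP => E; rewrite E in j0.
have hv := nz_has vZ; have hw := nz_has wZ.
case/orP: H => /eqP E.
  by rewrite -E in hw *; rewrite /= (lnz_act jZ hv hw).
by rewrite -E in hv *; rewrite /= (lnz_act jZ hw hv).
Qed.

Lemma lnz_conn (v w : V) : connect (@gedge_no0 p n) v w -> lnz v = lnz w.
Proof.
case/connectP => s Hp ->; elim: s v Hp => //= x s IH v /andP [e Hp].
by rewrite (lnz_edge e); apply: IH.
Qed.

Lemma lnz01 (j : A) x d : all01 j x -> (d = j \/ has (predC1 Z) x) ->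
  last d [seq y <- x | y != Z] = j.
Proof.
elim: x d => [|y x IH] d /=; first by move=> _ [].
case/andP => Hy Hx H.
case: (eqVneq y Z) => [E|yZ] /=.
  apply: IH => //; case: H => [->|]; [by left | rewrite E /= => ->; by right].
move: Hy; rewrite (negbTE yZ) /= => /eqP E; rewrite E /=.
by apply: IH => //; left.
Qed.

Lemma Pc_nz j (y : V) : j.+1 < t -> y \in (Pc j).2 -> y != zero_word p n.
Proof.
move=> H; rewrite inE => /andP [_ /eqP E]; apply/eqP => Ey; move: E.
rewrite Ey /= drop_nseq (Jb_cons H).
case: (n - Np j.+1) => //= m [] E _.
by move: (aZ H); rewrite -E eqxx.
Qed.

Lemma conn_step j : j.+1 < t -> connect (@gedge_no0 p n) (rt j) (rt j.+1).
Proof.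
move=> H; have Hj : j < t by apply: ltnW.
have Hin := rt_in2 Hj; rewrite Pc_orbit // inE in Hin.
rewrite -(iter_findex Hin); elim: (findex _ _ _) => [|m IH]; first exact: connect0.
apply: connect_trans IH (connect1 _).
have Hm : forall m, iter m (eact (nth Z a j)) (rt j) \in (Pc j).2.
  by move=> m'; rewrite Pc_orbit // inE fconnect_iter.
rewrite /= /gedge_no0 (Pc_nz H (Hm m)) (Pc_nz H (Hm m.+1)) /=.
by apply/existsP; exists (nth Z a j); rewrite lt0n (aZ Hj) eqxx.
Qed.

Lemma conn_u j : j < t -> connect (@gedge_no0 p n) u (rt j).
Proof.
elim: j => [|j IH] H; first by rewrite rt0 connect0.
by apply: connect_trans (IH (ltnW H)) (conn_step H).
Qed.

Lemma tm1 : t.-1 < t.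
Proof. by rewrite prednK ?t_pos. Qed.

Lemma lnz_rt : lnz (rt t.-1) = nth Z a t.-1.
Proof.
rewrite /lnz rtE ?(ltnW tm1) // rseq_S ?tm1 // prednK ?t_pos // Jb_t cats0.
apply: lnz01; first exact: (all01_block tm1).
by right; rewrite has_cat /= (aZ tm1) orbT.
Qed.

Lemma lnz_u : lnz u = nth Z a t.-1.
Proof. by rewrite (lnz_conn (conn_u tm1)) lnz_rt. Qed.

Lemma Pc_last : Pc t.-1 = Ccyc n (nth Z a t.-1).
Proof.
rewrite /Pc /Ccyc prednK ?t_pos // Jb_t Np_t; congr (_, _).
apply/setP => v; rewrite !inE take_oversize ?drop_oversize ?size_tuple //.
by rewrite eqxx andbT.
Qed.

Lemma maxc_last : maxc (Pc t.-1) = 1.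
Proof. by rewrite maxc_Pc ?tm1 //; have := t_pos; lia. Qed.

Lemma uniq_path vs cs : Bpath u vs cs (Pc t.-1) -> cs = mkseq Pc t.
Proof.
move=> HB.
have [[m0 Hs Hh Hall] [Uv Uc _ _ Hl]] := HB.
have Ml : maxc (last (Pc t.-1) cs) = 1 by rewrite Hl maxc_last.
have LA : forall j, j < size cs -> j < t -> nth u vs j = rt j -> nth (Pc t.-1) cs j = Pc j.
  move=> j Hjm Hjt Ev.
  case: (ltnP (bl (nth u vs j)) (maxc (nth (Pc t.-1) cs j))) => L.
    have := Down_last HB Hjm L; rewrite Ml.
    move: L; rewrite Ev bl_rt ?(ltnW Hjt) // => L1 L2; exfalso; lia.
  apply: (up_uniq (cyc_i HB Hjm) (Pc_cycle Hjt) (in1 HB Hjm) _ L).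
    by rewrite Ev rt_in1.
  by rewrite Ev maxc_Pc // bl_rt // ltnW.
have key : forall j, j < size cs -> j < t -> nth u vs j = rt j /\ nth (Pc t.-1) cs j = Pc j.
  elim=> [|j IH] Hjm Hjt.
    have E0 : nth u vs 0 = rt 0 by rewrite nth0 Hh rt0.
    by split => //; apply: LA.
  have Hjm' : j < size cs by apply: ltnW.
  have Hjt' : j < t by apply: ltnW.
  have [Ev Ec] := IH Hjm' Hjt'.
  suff Ev' : nth u vs j.+1 = rt j.+1 by split => //; apply: LA.
  have Hin := in2 HB Hjm; rewrite Ec in Hin.
  case: (leqP (maxc (Pc j)) (bl (nth u vs j.+1))) => L.
    have L0 : maxc (nth (Pc t.-1) cs j) <= bl (nth u vs j.+1) by rewrite Ec.
    have L2 := D2 HB Hjm L0.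
    have := Down_last HB Hjm L2; rewrite Ml.
    move: L L2; rewrite maxc_Pc // => L1 L2 L3; exfalso; lia.
  apply: (low_uniq (Pc_cycle Hjt') Hin (rt_in2 Hjt') L).
  by rewrite bl_rt // maxc_Pc //; lia.
have Em : size cs = t.
  case: (ltngtP (size cs) t) => // H.
  - have Hm1 : (size cs).-1 < size cs by rewrite prednK.
    have [_ E] := key _ Hm1 (leq_ltn_trans (leq_pred _) H).
    move: Ml; rewrite -nth_last E maxc_Pc; last by apply: leq_ltn_trans (leq_pred _) H.
    lia.
  - have [_ E] := key _ (ltn_trans tm1 H) tm1.
    have Hm1 : (size cs).-1 < size cs by rewrite prednK.
    have : nth (Pc t.-1) cs t.-1 == nth (Pc t.-1) cs (size cs).-1 by rewrite nth_last Hl E.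
    rewrite nth_uniq // ?(ltn_trans tm1 H) //; have := t_pos; lia.
apply: (eq_from_nth (x0 := (Pc t.-1))); first by rewrite size_mkseq.
move=> i Hi; have Hi' : i < t by rewrite -Em.
rewrite nth_mkseq //.
by have [_ ->] := key i Hi Hi'.
Qed.

Lemma path_exists : Bpath u (mkseq rt t) (mkseq Pc t) (Pc t.-1).
Proof.
split; split.
- by rewrite size_mkseq t_pos.
- by rewrite !size_mkseq.
- by rewrite -nth0 nth_mkseq ?t_pos // rt0.
- by apply/allP => c /mapP [j]; rewrite mem_iota add0n => /andP [_ Hj] ->; apply: Pc_cycle.
- rewrite map_inj_in_uniq ?iota_uniq // => j j'; rewrite !mem_iota !add0n => /andP [_ Hj] /andP [_ Hj'] E.
  have := congr1 (fun x : V => bl x) E; rewrite /= !bl_rt; [lia | exact: ltnW | exact: ltnW].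
- rewrite map_inj_in_uniq ?iota_uniq // => j j'; rewrite !mem_iota !add0n => /andP [_ Hj] /andP [_ Hj'] E.
  have := congr1 (@maxc p n) E; rewrite !maxc_Pc //; lia.
- by move=> j; rewrite size_mkseq => Hj; rewrite !nth_mkseq // rt_in1.
- move=> j; rewrite size_mkseq => Hj; have Hj' : j < t by apply: ltnW.
  by rewrite !nth_mkseq // rt_in2.
- by rewrite -nth_last size_mkseq nth_mkseq ?tm1.
Qed.

Lemma petal : in_petal (nth Z a t.-1) u.
Proof.
split => //; exists (rt t.-1).
  by rewrite -Pc_last rt_in1 // tm1.
rewrite conn_u ?tm1 // andbT; apply/eqP => E.
have := bl_rt (ltnW tm1); rewrite E /= /bl.
have -> : nb Z (nseq n Z) = 0 by elim: n.
have := t_pos; lia.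
Qed.

End Main.
Unset Implicit Arguments. Set Strict Implicit. Set Printing Implicit Defensive.

Theorem lemma4p11 (p n : nat) (hp : (1 <= p)%N) (hn : (1 <= n)%N)
  (u : n.-tuple 'I_p.+1) (hu : u != zero_word p n)
  (k : nat) (a : seq 'I_p.+1) (us : seq (seq 'I_p.+1))
  (hsize : size a = size us)
  (ha : all (fun x : 'I_p.+1 => (0 < x)%N) a)
  (hadj : forall j, (j.+1 < size a)%N -> nth ord0 a j != nth ord0 a j.+1)
  (hus : forall j, (j < size a)%N ->
           all (fun x => (x == ord0) || (x == nth ord0 a j)) (nth [::] us j))
  (hdec : val u = nseq k ord0 ++ join_blocks a us) :
  let t := size a in
  (* N j = N_{j+1} of the paper (0-based index j) *)
  let N := fun j => (k + j.+1 + \sum_(l < j.+1) size (nth [::] us l))%N in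
  (* P j = the (j+1)-th cycle of the path in the paper's 1-based numbering *)
  let P := fun j : nat =>
    ((nth ord0 a j,
      [set v : n.-tuple 'I_p.+1 |
         all (fun x => (x == ord0) || (x == nth ord0 a j)) (take (N j) v)
         && (drop (N j) v == join_blocks (drop j.+1 a) (drop j.+1 us))]) : ecycle p n) in
  (forall cs, path_of_cycles u cs <-> cs = mkseq P t) /\
  (forall cs, path_of_cycles u cs ->
     size cs = t /\ map (@cycle_length p n) cs = mkseq (fun j => 2 ^ N j) t) /\
  P t.-1 = Ccyc n (nth ord0 a t.-1) /\
  2 ^ N t.-1 = 2 ^ n.
Proof.
move=> t N P.
have EP : P = Pc n k a us by [].
have EN : forall j, N j = Np k us j.+1 by [].
have tp := t_pos hu hdec.
have tm := tm1 hu hdec.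
have P3 : P t.-1 = Ccyc n (nth ord0 a t.-1) by rewrite EP (Pc_last hu hsize ha hdec).
have P4 : 2 ^ N t.-1 = 2 ^ n by rewrite EN prednK // (Np_t hu hsize ha hdec).
have P1 : forall cs, path_of_cycles u cs <-> cs = mkseq P t.
  move=> cs; split.
  - case=> i [i0 [_ [w Hw /andP [wZ Hc]]] [vs HB]].
    have Ei : i = nth ord0 a t.-1.
      rewrite -(lnz_u hu hsize ha hadj hus hdec) (lnz_conn Hc) /lnz.
      symmetry; apply: lnz01; first by move: Hw; rewrite inE.
      by right; apply: nz_has.
    move: HB; rewrite Ei -(Pc_last hu hsize ha hdec) EP.
    exact: (uniq_path hu hsize ha hadj hus hdec).
  - move=> ->; exists (nth ord0 a t.-1); split.
    + by rewrite lt0n; apply: (aZ ha).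
    + exact: (petal hu hsize ha hadj hus hdec).
    + exists (mkseq (rt u k a us) t); rewrite -(Pc_last hu hsize ha hdec) EP.
      exact: (path_exists hu hsize ha hadj hus hdec).
split => //; split => //.
move=> cs /P1 ->; rewrite size_mkseq; split => //.
rewrite /mkseq -map_comp; apply/eq_in_map => j; rewrite mem_iota add0n => /andP [_ Hj] /=.
by rewrite /cycle_length EP (card_Pc hu hsize ha hdec Hj) EN.
Qed.
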